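(* Let $f\colon \mathbb{R}\to\mathbb{R}$ be a $\mathcal{C}^1$-smooth strictly convex function and let $x\in\mathbb{R}$ be a point with $f'(x)\neq 0$. Let $g=f'(x)$ and choose any initial scalar $h>0$. Consider the procedure: while $f(x-hg)\ge f(x)$, replace $h$ by its unit-step BFGS update $h_+$ at $x$ (defined below). Then this procedure terminates after finitely many iterations, i.e. eventually $f(x-hg)<f(x)$.
   Context: For a $\mathcal{C}^1$-smooth convex $f\colon\mathbb{R}^n\to\mathbb{R}$, a point $x$ with gradient $g=\nabla f(x)$, and a symmetric positive definite $n\times n$ matrix $H$, the unit-step BFGS update $H_+$ is defined by $s=-Hg$, $x_+=x+s$, $g_+=\nabla f(x_+)$, $y=g_+-g$, $V=I-\frac{sy^T}{s^Ty}$, $H_+=VHV^T+\frac{ss^T}{s^Ty}$ (defined when $s^Ty\neq 0$; strict convexity and $g\ne 0$ guarantee $s^Ty>0$). Here $n=1$, so $H=h$ is a positive scalar and the point $x$ stays fixed throughout the procedure. *)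

(* Defs.v *)
From Stdlib Require Import Reals.
Open Scope R_scope.

Definition C1_with_derivative (f df : R -> R) : Prop :=
  (forall t, derivable_pt_lim f t (df t)) /\ continuity df.

Definition strictly_convex (f : R -> R) : Prop :=
  forall a b t, a <> b -> 0 < t < 1 ->
    f (t * a + (1 - t) * b) < t * f a + (1 - t) * f b.

(* Unit-step BFGS update for n = 1 (H = h scalar), at the fixed point x,
   with gradient map df:  s = -h g, y = g_+ - g, V = 1 - s y/(s y),
   h_+ = V h V + s s/(s y). *)
Definition bfgs_update (df : R -> R) (x h : R) : R :=
  let g := df x in
  let s := - (h * g) in
  let xp := x + s in
  let gp := df xp in
  let y := gp - g in
  let V := 1 - s * y / (s * y) in
  V * h * V + s * s / (s * y).

Definition loop_step (f df : R -> R) (x h : R) : R :=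
  if Rle_dec (f x) (f (x - h * df x)) then bfgs_update df x h else h.

Fixpoint loop_iter (f df : R -> R) (x h0 : R) (k : nat) : R :=
  match k with
  | O => h0
  | S k' => loop_step f df x (loop_iter f df x h0 k')
  end.

(* Main.v *)
Require Import Defs.
From Stdlib Require Import Reals Lra Psatz Classical.
Open Scope R_scope.

Lemma tangent (f df : R -> R) :
  (forall t, derivable_pt_lim f t (df t)) -> strictly_convex f ->
  forall z w, f z + df z * (w - z) <= f w.
Proof.
  intros Hd Hc z w.
  destruct (Req_dec w z) as [E|NE]. { subst. lra. }
  apply Rnot_lt_le; intro H.
  set (D := w - z).
  assert (HD : D <> 0) by (unfold D; lra).
  assert (HaD : 0 < Rabs D) by (apply Rabs_pos_lt; auto).
  set (eta := f z + df z * D - f w).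
  assert (Heta : 0 < eta) by (unfold eta, D in *; lra).
  destruct (Hd z (eta / Rabs D)) as [del Hdel].
  { apply Rdiv_lt_0_compat; lra. }
  pose proof (cond_pos del) as Hdp.
  set (t := Rmin (1/2) (del / (2 * Rabs D))).
  assert (Ht0 : 0 < t).
  { unfold t; apply Rmin_pos; [lra| apply Rdiv_lt_0_compat; lra]. }
  assert (Ht1 : t <= 1/2) by (unfold t; apply Rmin_l).
  assert (Ht2 : t <= del / (2 * Rabs D)) by (unfold t; apply Rmin_r).
  assert (Hu0 : t * D <> 0) by (apply Rmult_integral_contrapositive; split; lra).
  assert (Hu1 : Rabs (t * D) < del).
  { rewrite Rabs_mult, (Rabs_pos_eq t) by lra.
    apply Rle_lt_trans with (del / (2 * Rabs D) * Rabs D).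
    - apply Rmult_le_compat_r; lra.
    - field_simplify; lra. }
  specialize (Hdel (t * D) Hu0 Hu1).
  set (a := f (z + t * D) - f z) in *.
  assert (Hm : Rabs (a - df z * (t * D)) < t * eta).
  { replace (a - df z * (t * D)) with ((a / (t * D) - df z) * (t * D)) by (field; repeat split; try lra; auto).
    rewrite Rabs_mult.
    replace (t * eta) with (eta / Rabs D * Rabs (t * D)).
    - apply Rmult_lt_compat_r; [apply Rabs_pos_lt; auto | exact Hdel].
    - rewrite Rabs_mult, (Rabs_pos_eq t) by lra. field. lra. }
  apply Rabs_def2 in Hm. destruct Hm as [Hm1 Hm2].
  assert (Hcv := Hc w z t NE (conj Ht0 (ltac:(lra) : t < 1))).
  replace (t * w + (1 - t) * z) with (z + t * D) in Hcv by (unfold D; ring).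
  unfold a, eta in *. nra.
Qed.

Lemma success (f df : R -> R) (x : R) :
  (forall t, derivable_pt_lim f t (df t)) -> df x <> 0 ->
  exists del, 0 < del /\ forall h, 0 < h < del -> f (x - h * df x) < f x.
Proof.
  intros Hd Hg. set (g := df x) in *.
  assert (Hag : 0 < Rabs g) by (apply Rabs_pos_lt; auto).
  destruct (Hd x (Rabs g / 2)) as [del Hdel]; [lra|].
  pose proof (cond_pos del) as Hdp.
  exists (del / Rabs g). split; [apply Rdiv_lt_0_compat; lra|].
  intros h [H0 H1].
  assert (Hu0 : - (h * g) <> 0).
  { apply Ropp_neq_0_compat, Rmult_integral_contrapositive; split; lra. }
  assert (Hu1 : Rabs (- (h * g)) < del).
  { rewrite Rabs_Ropp, Rabs_mult, (Rabs_pos_eq h) by lra.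
    apply (Rmult_lt_compat_r (Rabs g)) in H1; [|lra].
    field_simplify in H1; lra. }
  specialize (Hdel _ Hu0 Hu1). fold g in Hdel.
  set (Q := (f (x + - (h * g)) - f x) / - (h * g)) in *.
  assert (HF : f (x + - (h*g)) - f x = Q * (- (h * g))) by (unfold Q; field; lra).
  unfold Rminus at 1. 
  apply Rabs_def2 in Hdel. destruct Hdel as [A B].
  destruct (Rlt_or_le 0 g) as [Gp|Gn].
  - rewrite Rabs_pos_eq in * by lra. nra.
  - assert (g < 0) by (destruct Gn; auto; exfalso; auto).
    rewrite Rabs_left in * by lra. nra.
Qed.

Theorem mainTheorem1 (f df : R -> R) (x h : R) :
  C1_with_derivative f df ->
  strictly_convex f ->
  df x <> 0 ->
  0 < h ->
  exists k : nat, f (x - loop_iter f df x h k * df x) < f x.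
Proof.
  intros [Hd _] Hc Hg Hh.
  destruct (success f df x Hd Hg) as [del [Hdel Hsucc]].
  set (g := df x) in *.
  assert (Hg2 : 0 < g * g) by (apply Rsqr_pos_lt; auto).
  set (h1 := del / 2).
  set (p := x - h1 * g).
  assert (Hp : f p < f x) by (apply Hsucc; unfold h1; lra).
  set (eps := (f x - f p) / h).
  assert (Heps : 0 < eps) by (apply Rdiv_lt_0_compat; lra).
  assert (Key : forall k, 0 < k <= h -> f x <= f (x - k * g) ->
             0 < bfgs_update df x k <= g * g / (g * g + eps) * k).
  { intros k [K0 K1] Hf.
    assert (Kd : del <= k).
    { apply Rnot_lt_le; intro. specialize (Hsucc k (conj K0 H)). fold g in Hsucc. lra. }
    set (z := x + - (k * g)).
    pose proof (tangent f df Hd Hc z p) as T.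
    replace (p - z) with ((k - h1) * g) in T by (unfold p, z; ring).
    assert (Hfz : f z = f (x - k * g)) by reflexivity.
    assert (Hq : g * df z <= - eps).
    { assert (A : df z * g * (k - h1) <= - eps * h).
      { unfold eps. field_simplify; [|lra]. nra. }
      unfold h1 in *. nra. }
    unfold bfgs_update. fold g. fold z.
    replace (x + - (k * g)) with z by reflexivity.
    assert (Hsy : - (k * g) * (df z - g) = k * (g * g - g * df z)) by ring.
    assert (Hpos : 0 < g * g - g * df z) by lra.
    rewrite Hsy.
    replace (1 - k * (g * g - g * df z) / (k * (g * g - g * df z))) with 0
      by (field; lra).
    replace (0 * k * 0 + - (k * g) * - (k * g) / (k * (g * g - g * df z)))
      with (k * (g * g) / (g * g - g * df z)) by (field; lra).
    split.
    - apply Rdiv_lt_0_compat; nra.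
    - unfold Rdiv.
      assert (I : / (g * g - g * df z) <= / (g * g + eps)) by (apply Rinv_le_contravar; lra).
      assert (KG : 0 < k * (g * g)) by nra.
      nra. }
  destruct (classic (exists k, f (x - loop_iter f df x h k * g) < f x)) as [E|NE]; [exact E|].
  exfalso.
  assert (Fail : forall k, f x <= f (x - loop_iter f df x h k * g)).
  { intro k. apply Rnot_lt_le. intro H. apply NE. exists k. exact H. }
  set (r := g * g / (g * g + eps)).
  assert (Hr0 : 0 < r) by (apply Rdiv_lt_0_compat; lra).
  assert (Hr1 : r < 1).
  { unfold r. apply (Rmult_lt_reg_r (g * g + eps)); [lra|].
    field_simplify; lra. }
  assert (Bnd : forall k, 0 < loop_iter f df x h k <= h * r ^ k).
  { induction k as [|k IH].
    - simpl. lra.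
    - simpl loop_iter. unfold loop_step. fold g.
      destruct (Rle_dec (f x) (f (x - loop_iter f df x h k * g))) as [F|F];
        [|exfalso; apply F, Fail].
      assert (Hk : loop_iter f df x h k <= h).
      { apply Rle_trans with (h * r ^ k); [lra|].
        rewrite <- (Rmult_1_r h) at 2. apply Rmult_le_compat_l; [lra|].
        clear -Hr0 Hr1. induction k as [|k IHk]; simpl; [lra|].
        pose proof (pow_le r k (Rlt_le _ _ Hr0)). nra. }
      destruct (Key _ (conj (proj1 IH) Hk) F) as [B1 B2]. fold r in B2.
      split; [exact B1|]. simpl.
      apply Rle_trans with (r * loop_iter f df x h k); [exact B2|].
      nra. }
  destruct (pow_lt_1_zero r (ltac:(rewrite Rabs_pos_eq; lra)) (del / h)
              (ltac:(apply Rdiv_lt_0_compat; lra))) as [N HN].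
  specialize (HN N (le_n N)).
  rewrite Rabs_pos_eq in HN by (apply pow_le; lra).
  destruct (Bnd N) as [B1 B2].
  assert (loop_iter f df x h N < del).
  { apply Rle_lt_trans with (h * r ^ N); [exact B2|].
    apply (Rmult_lt_compat_l h) in HN; [|lra]. field_simplify in HN; lra. }
  specialize (Hsucc _ (conj B1 H)). fold g in Hsucc.
  specialize (Fail N). lra.
Qed.
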